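(* Let $d\ge 11$ and set $$\alpha_{-}=2-2\sqrt{\frac{d-4}{3(d-2)}},\qquad \beta_{-}=\frac{2}{3}(d-4)-\frac{1}{3}\sqrt{3(d-2)(d-4)},\qquad u_{-}(y)=1-\frac{\alpha_{-}y^{2}}{y^{2}+\beta_{-}}.$$ Then $u_-\in C^\infty([0,1])$ and $u_-$ solves $$y^{2}(1-y^{2})u''(y)+\big((d-3)y-2y^{3}\big)u'(y)+(d-2)\,u(y)\big(1-u(y)^{2}\big)=0\quad\text{on } [0,1].$$
   Context: Here $d$ denotes the spatial dimension (an integer). Smoothness on $[0,1]$ means one-sided derivatives of all orders exist and are continuous up to the endpoints. *)

(* Defs.v *)
From Stdlib Require Import Reals Lra.
From Coquelicot Require Import Coquelicot.
Open Scope R_scope.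

Definition I01 (y : R) : Prop := 0 <= y <= 1.

Definition is_derive_01 (f : R -> R) (x l : R) : Prop :=
  filterlim (fun y => (f y - f x) / (y - x))
            (within (fun y => I01 y /\ y <> x) (locally x)) (locally l).

Definition continuous_01 (f : R -> R) (x : R) : Prop :=
  filterlim f (within I01 (locally x)) (locally (f x)).

Definition derivs_01 (f : R -> R) (D : nat -> R -> R) : Prop :=
  (forall y, I01 y -> D O y = f y) /\
  (forall n y, I01 y -> is_derive_01 (D n) y (D (S n) y)) /\
  (forall n y, I01 y -> continuous_01 (D n) y).

Definition smooth_01 (f : R -> R) : Prop := exists D, derivs_01 f D.

Definition alpha_m (d : nat) : R :=
  2 - 2 * sqrt ((INR d - 4) / (3 * (INR d - 2))).
Definition beta_m (d : nat) : R :=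
  2 / 3 * (INR d - 4) - 1 / 3 * sqrt (3 * (INR d - 2) * (INR d - 4)).
Definition u_m (d : nat) (y : R) : R :=
  1 - alpha_m d * y ^ 2 / (y ^ 2 + beta_m d).

(* Main.v *)
Require Import Defs.
From Stdlib Require Import Reals Lra List.
From Coquelicot Require Import Coquelicot.
Import ListNotations.
Open Scope R_scope.
Definition gg (b y : R) := / (y ^ 2 + b).
Fixpoint ev (b : R) (L : list (R * nat * nat)) (y : R) : R :=
  match L with nil => 0 | (c, i, j) :: L' => c * y ^ i * (gg b y) ^ j + ev b L' y end.
Definition dmon (m : R * nat * nat) : list (R * nat * nat) :=
  let '(c, i, j) := m in [(c * INR i, pred i, j); (-2 * c * INR j, S i, S j)].
Fixpoint dl (L : list (R * nat * nat)) := match L with nil => nil | m :: L' => dmon m ++ dl L' end.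
Lemma ev_app b L1 L2 y : ev b (L1 ++ L2) y = ev b L1 y + ev b L2 y.
Proof. induction L1 as [|[[c i] j] L IH]; simpl; [ring| rewrite IH; ring]. Qed.
Lemma mon_deriv b c i j x : 0 < b ->
  is_derive (fun y => c * y ^ i * (gg b y) ^ j) x (ev b (dmon (c, i, j)) x).
Proof.
  intros hb. unfold gg. auto_derive.
  - nra.
  - replace (x * (x * 1) + b) with (x ^ 2 + b) by ring.
    assert (hp : x ^ 2 + b <> 0) by nra.
    replace (/ ((x ^ 2 + b) * (x ^ 2 + b))) with (/ (x ^ 2 + b) * / (x ^ 2 + b)) by (field; auto).
    cbn [ev dmon]. unfold gg. set (G := / (x ^ 2 + b)).
    change R in x.
    destruct j as [|k]; simpl pred; [simpl; ring|].
    rewrite S_INR. change (G ^ S k) with (G * G^k). change (G ^ S (S k)) with (G * (G * G^k)).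
    change (x ^ S i) with (x * x^i). ring.
Qed.
Lemma ev_deriv b L x : 0 < b -> is_derive (ev b L) x (ev b (dl L) x).
Proof.
  intros hb. induction L as [|[[c i] j] L IH].
  - simpl. auto_derive; auto.
  - change (dl ((c,i,j)::L)) with (dmon (c,i,j) ++ dl L).
    rewrite ev_app.
    apply (is_derive_ext (fun y => c * y ^ i * gg b y ^ j + ev b L y)).
    { intros t. reflexivity. }
    apply (is_derive_plus (fun y => c * y ^ i * gg b y ^ j)).
    + exact (mon_deriv b c i j x hb).
    + exact IH.
Qed.
Lemma ballR (a e z : R) : ball a e z <-> Rabs (z - a) < e.
Proof. unfold ball; simpl; unfold AbsRing_ball, abs, minus, plus, opp; simpl. tauto. Qed.
Lemma deriv01_of (f : R -> R) (x l : R) : is_derive f x l -> is_derive_01 f x l.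
Proof.
  intros H. apply is_derive_Reals in H. unfold is_derive_01.
  apply filterlim_locally. intros eps.
  destruct (H eps (cond_pos eps)) as [del Hd].
  exists del. intros z hz [_ hzx]. change R in z. apply ballR in hz. apply ballR.
  assert (hh : z - x <> 0) by lra.
  specialize (Hd (z - x) hh hz). replace (x + (z - x)) with z in Hd by ring. exact Hd.
Qed.
Lemma cont01_of (f : R -> R) (x l : R) : is_derive f x l -> continuous_01 f x.
Proof.
  intros H. unfold continuous_01.
  assert (C := ex_derive_continuous (K:=R_AbsRing) (V:=R_NormedModule) f x (ex_intro _ l H)).
  intros P HP. apply filter_le_within. apply C. exact HP.
Qed.
Lemma proper_w (x : R) : I01 x -> ProperFilter' (within (fun y => I01 y /\ y <> x) (locally x)).
Proof.
  intros hx. constructor.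
  - intros [e He]. unfold I01 in hx.
    set (m := Rmin (e/2) (1/4)).
    assert (h1 : m <= e/2) by apply Rmin_l.
    assert (h2 : m <= 1/4) by apply Rmin_r.
    assert (h3 : 0 < m) by (apply Rmin_glb_lt; generalize (cond_pos e); lra).
    destruct (Rle_dec x (1/2)) as [hl|hl].
    + apply (He (x + m)).
      * apply ballR. rewrite Rabs_right; generalize (cond_pos e); lra.
      * unfold I01; lra.
    + apply (He (x - m)).
      * apply ballR. rewrite Rabs_left; generalize (cond_pos e); lra.
      * unfold I01; lra.
  - apply within_filter. apply locally_filter.
Qed.
Lemma unique01 (f : R -> R) (x l1 l2 : R) : I01 x -> is_derive_01 f x l1 -> is_derive_01 f x l2 -> l1 = l2.
Proof.
  intros hx h1 h2. pose proof (proper_w x hx).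
  exact (filterlim_locally_unique _ l1 l2 h1 h2).
Qed.
Lemma ext01 (f g : R -> R) (x l : R) : I01 x -> (forall y, I01 y -> f y = g y) -> is_derive_01 f x l -> is_derive_01 g x l.
Proof.
  intros hx he h. unfold is_derive_01 in *.
  pose proof (proper_w x hx) as P.
  apply (filterlim_ext_loc (fun y => (f y - f x) / (y - x))); [|exact h].
  exists (mkposreal 1 Rlt_0_1). intros z _ [hz _]. rewrite (he z hz), (he x hx). reflexivity.
Qed.
Theorem mainTheorem3 (d : nat) (hd : (11 <= d)%nat) :
  smooth_01 (u_m d) /\
  (forall D : nat -> R -> R, derivs_01 (u_m d) D ->
     forall y, I01 y ->
       y ^ 2 * (1 - y ^ 2) * D 2%nat y
       + ((INR d - 3) * y - 2 * y ^ 3) * D 1%nat y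
       + (INR d - 2) * u_m d y * (1 - (u_m d y) ^ 2) = 0).
Proof.
  assert (hD : 11 <= INR d) by (replace 11 with (INR 11) by (simpl; ring); apply le_INR; exact hd).
  set (s := sqrt ((INR d - 4) / (3 * (INR d - 2)))).
  assert (hs0 : 0 <= s) by apply sqrt_pos.
  assert (hs2 : s * s = (INR d - 4) / (3 * (INR d - 2))).
  { apply sqrt_sqrt. apply Rmult_le_pos; [lra| left; apply Rinv_0_lt_compat; lra]. }
  assert (hs3 : 3 * (INR d - 2) * (s * s) = INR d - 4) by (rewrite hs2; field; lra).
  assert (ht : sqrt (3 * (INR d - 2) * (INR d - 4)) = 3 * (INR d - 2) * s).
  { assert (E : 3 * (INR d - 2) * (INR d - 4) = (3 * (INR d - 2) * s) * (3 * (INR d - 2) * s))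
      by (rewrite <- hs3; ring).
    rewrite E, sqrt_square; [reflexivity| nra]. }
  assert (hb : beta_m d = 2 / 3 * (INR d - 4) - (INR d - 2) * s) by (unfold beta_m; rewrite ht; field).
  assert (ha : alpha_m d = 2 - 2 * s) by reflexivity.
  assert (bpos : 0 < beta_m d).
  { rewrite hb. destruct (Rlt_dec ((INR d - 2) * s) (2 / 3 * (INR d - 4))) as [h|h]; [lra|].
    exfalso. apply Rnot_lt_le in h. nra. }
  set (b := beta_m d) in *. set (a := alpha_m d) in *.
  set (L0 := [(1, 0%nat, 0%nat); (- a, 2%nat, 1%nat)]).
  set (E := fun n => ev b (Nat.iter n dl L0)).
  assert (E0 : forall y, E 0%nat y = u_m d y).
  { intros y. unfold E, u_m. simpl. fold a b. unfold gg. field. nra. }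
  assert (ED : forall n x, is_derive (E n) x (E (S n) x)).
  { intros n x. exact (ev_deriv b _ x bpos). }
  split.
  - exists E. split; [intros y _; apply E0|]. split.
    + intros n y _. apply deriv01_of. apply ED.
    + intros n y _. apply (cont01_of _ _ _ (ED n y)).
  - intros D [D0 [D1 D2]] y hy.
    assert (DE : forall n z, I01 z -> D n z = E n z).
    { induction n as [|n IH]; intros z hz.
      - rewrite D0 by exact hz. symmetry. apply E0.
      - apply (unique01 (E n) z); [exact hz| |apply deriv01_of, ED].
        apply (ext01 (D n)); [exact hz|exact IH|apply D1; exact hz]. }
    rewrite (DE 2%nat y hy), (DE 1%nat y hy).
    assert (hp : y ^ 2 + b <> 0) by nra.
    assert (E1 : E 1%nat y = -2 * a * b * y / (y ^ 2 + b) ^ 2).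
    { unfold E. change (Nat.iter 1 dl L0) with (dl L0). unfold L0. cbn [dl dmon app ev Nat.pred]. unfold gg. simpl INR. field. exact hp. }
    assert (E2 : E 2%nat y = -2 * a * b * (b - 3 * y ^ 2) / (y ^ 2 + b) ^ 3).
    { unfold E. change (Nat.iter 2 dl L0) with (dl (dl L0)). unfold L0. cbn [dl dmon app ev Nat.pred]. unfold gg. simpl INR. field. exact hp. }
    rewrite E1, E2. unfold u_m. fold a b.
    assert (c2 : -2 * b + (INR d - 2) * (1 - a) * (2 - a) = 0) by (rewrite hb, ha; nra).
    assert (c1 : 12 - 2 * INR d + 6 * b + (INR d - 2) * (4 - 3 * a) = 0) by (rewrite hb, ha; nra).
    transitivity (a * y ^ 2 / (y ^ 2 + b) ^ 3 *
      ((-2 * b + (INR d - 2) * (1 - a) * (2 - a)) * y ^ 4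
       + b * (12 - 2 * INR d + 6 * b + (INR d - 2) * (4 - 3 * a)) * y ^ 2)).
    + field. exact hp.
    + rewrite c2, c1. ring.
Qed.
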